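(* For every forward trie $\mathsf{T}_f$ with $n$ nodes over an alphabet of size $\sigma$, the minimal deterministic finite automaton accepting $\mathrm{Suffix}(\mathsf{T}_f)$ has $O(\sigma n)$ transitions. Moreover, for some forward tries $\mathsf{T}_f$ with $n$ nodes, this minimal DFA has $\Omega(\sigma n)$ transitions, which is $\Omega(n^2)$ for an alphabet of size $\sigma=\Theta(n)$. The same upper and lower bounds hold for the minimal DFA accepting $\mathrm{Substr}(\mathsf{T}_f)$.
   Context: An alphabet $\Sigma$ is a finite ordered set of characters, and $\sigma=|\Sigma|$. A forward trie $\mathsf{T}_f$ is a rooted tree with $n$ nodes in which every edge is directed from parent to child and labeled by a single character of $\Sigma$, such that the edges leaving any node carry pairwise distinct labels. For nodes $u,v$ with $u$ an ancestor of $v$ (possibly $u=v$), $\mathrm{str}_f(u,v)$ is the string of labels read along the downward path from $u$ to $v$. Define $\mathrm{Substr}(\mathsf{T}_f)=\{\mathrm{str}_f(u,v): u \text{ an ancestor of } v\}$ and $\mathrm{Suffix}(\mathsf{T}_f)=\{\mathrm{str}_f(u,\ell): \ell \text{ a leaf},\ u \text{ an ancestor of } \ell\}$. DFAs are partial (transitions to a dead state are not counted). *)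

(* Defs.v *)
From mathcomp Require Import all_boot.
Set Implicit Arguments. Unset Strict Implicit. Unset Printing Implicit Defensive.

(* A forward trie over the alphabet Sigma with n nodes: the nodes are 'I_n,
   every non-root node v has the parent [parent v] and the edge
   (parent v) -> v is labelled [label v].  [parent root = root] is a dummy
   convention; the root's label is irrelevant. *)
Record trie (Sigma : finType) (n : nat) := Trie {
  root   : 'I_n;
  parent : 'I_n -> 'I_n;
  label  : 'I_n -> Sigma;
  parent_root : parent root = root;
  reach_root : forall v : 'I_n, exists k, iter k parent v = root;
  label_inj : forall u v : 'I_n, u != root -> v != root ->
      parent u = parent v -> label u = label v -> u = v
}.

(* u = iter k parent v is an ancestor of v at distance exactly k (no step
   passes through the root).  The string read downward from u to v. *)
Definition up_path (Sigma : finType) (n : nat) (T : trie Sigma n)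
    (v : 'I_n) (k : nat) : Prop :=
  forall i, i < k -> iter i (parent T) v != root T.

Definition path_str (Sigma : finType) (n : nat) (T : trie Sigma n)
    (v : 'I_n) (k : nat) : seq Sigma :=
  rev [seq label T (iter i (parent T) v) | i <- iota 0 k].

Definition is_leaf (Sigma : finType) (n : nat) (T : trie Sigma n) (v : 'I_n) :=
  forall c : 'I_n, c != root T -> parent T c <> v.

Definition Substr (Sigma : finType) (n : nat) (T : trie Sigma n)
    (w : seq Sigma) : Prop :=
  exists (v : 'I_n) (k : nat), up_path T v k /\ w = path_str T v k.

Definition Suffix (Sigma : finType) (n : nat) (T : trie Sigma n)
    (w : seq Sigma) : Prop :=
  exists (v : 'I_n) (k : nat), is_leaf T v /\ up_path T v k /\ w = path_str T v k.

Record dfa (Sigma : finType) := Dfa {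
  state : finType;
  start : state;
  delta : state -> Sigma -> option state;   (* None = missing transition *)
  final : pred state
}.

Fixpoint run (Sigma : finType) (M : dfa Sigma) (q : state M) (w : seq Sigma)
    : option (state M) :=
  match w with
  | [::] => Some q
  | a :: w' => match delta q a with Some q' => run q' w' | None => None end
  end.

Definition accepted (Sigma : finType) (M : dfa Sigma) (w : seq Sigma) : bool :=
  if run (start M) w is Some q then final q else false.

Definition accepts (Sigma : finType) (M : dfa Sigma) (L : seq Sigma -> Prop) :=
  forall w, L w <-> accepted M w.

Definition ntrans (Sigma : finType) (M : dfa Sigma) : nat :=
  #|[set qa : (state M * Sigma)%type | delta qa.1 qa.2 != None]|.

Definition minimal_dfa (Sigma : finType) (M : dfa Sigma) (L : seq Sigma -> Prop) :=
  accepts M L /\ forall M' : dfa Sigma, accepts M' L -> #|state M| <= #|state M'|.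

(* Main.v *)
Require Import Defs.
From mathcomp Require Import all_boot.
From Stdlib Require Import ClassicalEpsilon Classical.
From mathcomp Require Import zify.
Set Implicit Arguments. Unset Strict Implicit. Unset Printing Implicit Defensive.

Definition stepT (S : finType) n (T : trie S n) (X : {set 'I_n}) (a : S) : {set 'I_n} :=
  [set v | (v != Defs.root T) && (label T v == a) && (parent T v \in X)].
Definition Ew (S : finType) n (T : trie S n) (w : seq S) := foldl (stepT T) setT w.

Lemma stepT_mono (S : finType) n (T : trie S n) (X Y : {set 'I_n}) a :
  X \subset Y -> stepT T X a \subset stepT T Y a.
Proof.
move=> /subsetP XY; apply/subsetP => v; rewrite !inE => /andP[-> /XY ->].
by rewrite andbT.
Qed.

Lemma foldl_mono (S : finType) n (T : trie S n) w : forall X Y : {set 'I_n},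
  X \subset Y -> foldl (stepT T) X w \subset foldl (stepT T) Y w.
Proof. elim: w => //= a w IH X Y XY; exact/IH/stepT_mono. Qed.

Lemma foldl0 (S : finType) n (T : trie S n) w : foldl (stepT T) set0 w = set0.
Proof.
elim: w => //= a w IH; suff -> : stepT T set0 a = set0 by [].
by apply/setP => v; rewrite !inE andbF.
Qed.

Lemma path_strS (S : finType) n (T : trie S n) v k :
  path_str T v k.+1 = rcons (path_str T (parent T v) k) (label T v).
Proof.
rewrite /path_str -addn1 addnC iotaD /= rev_cons; congr rcons.
rewrite (iotaDl 1 0) -map_comp; congr rev; apply: eq_map => i /=.
by rewrite add0n -iterS iterSr.
Qed.

Lemma up_pathS (S : finType) n (T : trie S n) v k :
  up_path T v k.+1 <-> v != Defs.root T /\ up_path T (parent T v) k.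
Proof.
split.
  move=> H; split; first exact: (H 0).
  move=> i lt; have := H i.+1 lt; by rewrite iterSr.
move=> [Hv H] [|i] //= lt; rewrite -iterS iterSr; exact: H.
Qed.

Lemma size_path_str (S : finType) n (T : trie S n) v k : size (path_str T v k) = k.
Proof. by rewrite /path_str size_rev size_map size_iota. Qed.

Lemma Ew_char (S : finType) n (T : trie S n) w : forall v,
  v \in Ew T w <-> up_path T v (size w) /\ path_str T v (size w) = w.
Proof.
elim/last_ind: w => [|w a IH] v.
  by rewrite /Ew /= inE; split => // _; split => // i.
rewrite /Ew -cats1 foldl_cat cats1 -/(Ew T w) /= size_rcons path_strS up_pathS.
rewrite inE -andbA; split.
  move=> /and3P[Hr /eqP La /IH [H1 H2]]; by rewrite H2 La.
move=> [[Hr H1] /eqP]; rewrite eqseq_rcons => /andP[/eqP H2 /eqP La].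
by rewrite Hr La eqxx /=; apply/IH.
Qed.

Definition leafb (S : finType) n (T : trie S n) (v : 'I_n) : bool :=
  [forall c, (c != Defs.root T) ==> (parent T c != v)].

Lemma leafbP (S : finType) n (T : trie S n) v : is_leaf T v <-> leafb T v.
Proof.
split.
  move=> H; apply/forallP => c; apply/implyP => Hc; apply/eqP; exact: H.
move=> /forallP H c Hc; move: (H c); rewrite Hc /= => /eqP //.
Qed.

Lemma Suffix_char (S : finType) n (T : trie S n) w :
  Suffix T w <-> [exists v in Ew T w, leafb T v].
Proof.
split.
  move=> [v [k [L [U E]]]]; apply/existsP; exists v; apply/andP; split.
    apply/Ew_char; by rewrite E size_path_str.
  exact/leafbP.
move=> /existsP[v /andP[/Ew_char [U E] L]]; exists v, (size w); split => //.
exact/leafbP.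
Qed.

Lemma Substr_char (S : finType) n (T : trie S n) w :
  Substr T w <-> Ew T w != set0.
Proof.
split.
  move=> [v [k [U E]]]; apply/set0Pn; exists v.
  apply/Ew_char; by rewrite E size_path_str.
move=> /set0Pn[v /Ew_char [U E]]; by exists v, (size w).
Qed.

Lemma path_str_split (S : finType) n (T : trie S n) k : forall v j,
  path_str T v (k + j) = path_str T (iter k (parent T) v) j ++ path_str T v k.
Proof.
elim: k => [|k IH] v j; first by rewrite /path_str /= cats0.
by rewrite addSn path_strS IH path_strS rcons_cat iterSr.
Qed.

Lemma Ew_suffix (S : finType) n (T : trie S n) w w' v :
  v \in Ew T w -> v \in Ew T w' -> size w <= size w' -> exists z, w' = z ++ w.
Proof.
move=> /Ew_char[_ E] /Ew_char[_ E'] le.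
rewrite -(subnK le) addnC path_str_split E in E'.
by eexists; symmetry; exact: E'.
Qed.

Lemma Ew_lam (S : finType) n (T : trie S n) w w' :
  Ew T w :&: Ew T w' != set0 -> (Ew T w \subset Ew T w') || (Ew T w' \subset Ew T w).
Proof.
move=> /set0Pn[v]; rewrite inE => /andP[H1 H2].
case: (leqP (size w) (size w')) => le.
  have [z ->] := Ew_suffix H1 H2 le.
  apply/orP; right; rewrite /Ew foldl_cat; apply: foldl_mono; exact: subsetT.
have [z ->] := Ew_suffix H2 H1 (ltnW le).
apply/orP; left; rewrite /Ew foldl_cat; apply: foldl_mono; exact: subsetT.
Qed.

Definition laminar (T : finType) (F : {set {set T}}) :=
  forall A B, A \in F -> B \in F -> A :&: B != set0 -> (A \subset B) || (B \subset A).

Lemma ne0_sub (T : finType) (A B : {set T}) : A \subset B -> A != set0 -> B != set0.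
Proof.
move=> s; apply: contra => /eqP B0; by rewrite -subset0 -B0.
Qed.

Lemma collide1 (T : finType) (F : {set {set T}}) (x : T) (A A' : {set T}) :
  laminar F -> A \in F -> A' \in F -> x \in A -> x \in A' -> A \subset A' ->
  A :\ x != set0 -> A' :\ x \in F -> A' :\ x \subset A :\ x.
Proof.
move=> lam AF A'F xA xA' sub ne B'F.
have sB : A :\ x \subset A' :\ x by apply: setSD.
have : (A' :\ x) :&: A != set0.
  apply: (ne0_sub _ ne); rewrite subsetI sB; exact: subsetDl.
move=> /(lam _ _ B'F AF) /orP[s|s].
  apply/subsetP => y /setD1P[yx yA']; apply/setD1P; split => //.
  apply: (subsetP s); exact/setD1P.
by move: (subsetP s x xA); rewrite !inE eqxx.
Qed.

Lemma laminar_card (T : finType) (k : nat) : forall (U : {set T}) (F : {set {set T}}),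
  #|U| = k -> laminar F -> (forall A, A \in F -> A \subset U) -> #|F| <= (2 * k).+1.
Proof.
elim: k => [|k IH] U F cU lam sub.
  move: cU => /eqP; rewrite cards_eq0 => /eqP U0.
  have : F \subset [set set0].
    apply/subsetP => A AF; rewrite inE; move: (sub A AF); rewrite U0 subset0.
    by [].
  by move=> /subset_leq_card; rewrite cards1.
have [x xU] : exists x, x \in U.
  by apply/set0Pn; rewrite -card_gt0 cU.
pose g := fun A : {set T} => A :\ x.
pose F1 := [set A in F | x \in A].
pose F2 := [set A in F | x \notin A].
pose F' := g @: F.
have cU' : #|U :\ x| = k by move: (cardsD1 x U); rewrite xU cU add1n => -[].
have lam' : laminar F'.
  move=> A' B' /imsetP[A AF ->] /imsetP[B BF ->] ne.
  have : A :&: B != set0.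
    apply: (ne0_sub _ ne); apply: setISS; exact: subsetDl.
  by move=> /(lam _ _ AF BF) /orP[s|s]; apply/orP; [left|right]; apply: setSD.
have sub' : forall A, A \in F' -> A \subset U :\ x.
  by move=> A' /imsetP[A AF ->]; apply: setSD; apply: sub.
have H' := IH _ _ cU' lam' sub'.
have eF : #|F| = #|F1| + #|F2|.
  rewrite -(cardsID [set A : {set T} | x \in A] F); rewrite /F1 /F2; congr (_ + _); apply: eq_card => A.
    by rewrite !inE andbC.
  by rewrite !inE andbC.
have eF' : F' = g @: F1 :|: F2.
  apply/setP => B; apply/imsetP/setUP.
    move=> [A AF ->]; case xA: (x \in A).
      by left; apply/imsetP; exists A => //; rewrite inE AF xA.
    have gA : g A = A by apply/setP => y; rewrite !inE; case: eqP => // ->; rewrite xA.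
    by right; rewrite gA inE AF xA.
  case=> [/imsetP[A] | ]; rewrite inE.
    by move=> /andP[AF _] ->; exists A.
  move=> /andP[BF xB]; exists B => //.
  apply/setP => y; rewrite !inE; case: eqP => // ->; by rewrite (negbTE xB).
have cg : #|g @: F1| = #|F1|.
  apply: card_in_imset => A B; rewrite !inE => /andP[_ xA] /andP[_ xB] E.
  apply/setP => y; case: (y =P x) => [->|/eqP ne]; first by rewrite xA xB.
  by move/setP: E => /(_ y); rewrite !inE ne.
pose O := g @: F1 :&: F2.
have cO : #|O| <= 2.
  rewrite (cardsD1 set0 O) -[2]/(1+1); apply: leq_add; first by case: (_ \in _).
  apply/card_le1_eqP => B B'.
  have get : forall C, C \in O :\ set0 -> exists2 A, A \in F & 
      [/\ x \in A, C = g A, C != set0 & C \in F].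
    move=> C; rewrite !inE => /andP[nC /andP[/imsetP[A AF1 eC] CF2]]; subst C.
    move: AF1 CF2; rewrite !inE => /andP[AF xA] /andP[CF _].
    by exists A => //; split.
  move=> /get[A AF [xA -> nB BF]] /get[A' A'F [xA' -> nB' B'F]].
  have : A :&: A' != set0 by apply/set0Pn; exists x; rewrite inE xA xA'.
  move=> /(lam _ _ AF A'F) /orP[s|s].
    apply/eqP; rewrite eqEsubset (collide1 lam AF A'F) // ?andbT.
    by apply: setSD.
  apply/eqP; rewrite eqEsubset (collide1 lam A'F AF) // ?andbT.
  by apply: setSD.
move: (cardsUI (g @: F1) F2); rewrite -eF' cg -eF -/O => E.
have : #|F| <= #|F'| + 2 by rewrite -E leq_add2l.
move=> h; apply: (leq_trans h); move: H'; rewrite mulnS; move: #|F'| => a; lia.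
Qed.

Definition Reach (S : finType) n (T : trie S n) (X : {set 'I_n}) : bool :=
  if excluded_middle_informative (exists w, Ew T w = X) then true else false.

Lemma ReachP (S : finType) n (T : trie S n) X : reflect (exists w, Ew T w = X) (Reach T X).
Proof.
rewrite /Reach; case: excluded_middle_informative => H; [left|right] => //.
Qed.

Definition stT (S : finType) n (T : trie S n) := {X : {set 'I_n} | Reach T X}.

Lemma Reach_setT (S : finType) n (T : trie S n) : Reach T setT.
Proof. by apply/ReachP; exists [::]. Qed.

Lemma Reach_step (S : finType) n (T : trie S n) X a : Reach T X -> Reach T (stepT T X a).
Proof.
move=> /ReachP[w <-]; apply/ReachP; exists (rcons w a).
by rewrite /Ew -cats1 foldl_cat.
Qed.

Definition st0 (S : finType) n (T : trie S n) : stT T := exist _ setT (Reach_setT T).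

Definition dl (S : finType) n (T : trie S n) (s : stT T) (a : S) : option (stT T) :=
  if stepT T (val s) a == set0 then None else insub (stepT T (val s) a).

Definition Msuf (S : finType) n (T : trie S n) : dfa S :=
  @Dfa S (stT T) (st0 T) (@dl S n T) (fun s => [exists v in val s, leafb T v]).
Definition Msub (S : finType) n (T : trie S n) : dfa S :=
  @Dfa S (stT T) (st0 T) (@dl S n T) (fun s => true).


Lemma run_spec (S : finType) n (T : trie S n) fin w : forall s : stT T,
  val s != set0 ->
  omap val (@run S (@Dfa S (stT T) (st0 T) (@dl S n T) fin) s w) =
  if foldl (stepT T) (val s) w == set0 then None else Some (foldl (stepT T) (val s) w).
Proof.
elim: w => [|a w IH] s ns /=; first by rewrite (negbTE ns).
rewrite /dl; case: ifP => [/eqP -> |ne]; first by rewrite foldl0 eqxx.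
case: insubP => [s1 _ e1|]; last by rewrite (Reach_step a (valP s)).
by rewrite IH e1 // ne.
Qed.

Lemma nonempty_T (S : finType) n (T : trie S n) : [set: 'I_n] != set0.
Proof. by apply/set0Pn; exists (Defs.root T). Qed.

Lemma accepted_gen (S : finType) n (T : trie S n) fin w :
  accepted (@Dfa S (stT T) (st0 T) (@dl S n T) fin) w =
  if Ew T w == set0 then false else
    if insub (Ew T w) is Some s then fin s else false.
Proof.
rewrite /accepted /=; have := @run_spec _ _ T fin w (st0 T) (nonempty_T T).
case: (run _ _) => [q|] /=; rewrite -/(Ew T w); case: ifP => // ne [e].
case: insubP => [s _ es|].
  by congr fin; apply: val_inj => /=; rewrite es e.
move=> /negP[]; rewrite -e; exact: (valP q).
Qed.

Lemma Msuf_acc (S : finType) n (T : trie S n) : accepts (Msuf T) (Suffix T).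
Proof.
move=> w; rewrite Suffix_char accepted_gen.
case: ifP => [/eqP -> | ne].
  by split; [move=> /existsP[v]; rewrite inE|].
case: insubP => [s _ es|]; first by rewrite /= es.
move=> /negP[]; apply/ReachP; by exists w.
Qed.

Lemma Msub_acc (S : finType) n (T : trie S n) : accepts (Msub T) (Substr T).
Proof.
move=> w; rewrite Substr_char accepted_gen.
case: ifP => [_|ne]; first by [].
case: insubP => [s _ es|] //.
move=> /negP[]; apply/ReachP; by exists w.
Qed.

Lemma card_stT (S : finType) n (T : trie S n) : #|{: stT T}| <= (2 * n).+1.
Proof.
rewrite card_sig.
have -> : #|[pred X | Reach T X]| = #|[set X | Reach T X]|.
  by apply: eq_card => X; rewrite !inE.
apply: (@laminar_card _ n setT); first by rewrite cardsT card_ord.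
  move=> A B; rewrite !inE => /ReachP[w <-] /ReachP[w' <-]; exact: Ew_lam.
by move=> A _; apply: subsetT.
Qed.

Lemma ntrans_le (S : finType) (M : dfa S) : ntrans M <= #|state M| * #|S|.
Proof.
rewrite /ntrans -card_prod; apply: subset_leq_card; apply/subsetP => x _.
by rewrite inE.
Qed.

Lemma minimal_exists (S : finType) (L : seq S -> Prop) k :
  (exists M : dfa S, accepts M L /\ #|state M| <= k) -> exists M, minimal_dfa M L.
Proof.
elim: k => [|k IH] [M [acc le]].
  exists M; split => // M' _; move: le; rewrite leqn0 => /eqP ->; done.
case: (classic (exists M' : dfa S, accepts M' L /\ #|state M'| <= k)); first exact: IH.
move=> H; exists M; split => // M' acc'.
apply: (leq_trans le); rewrite ltnNge; apply/negP => le'; apply: H; by exists M'.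
Qed.

Lemma upper_gen (S : finType) n (T : trie S n) (L : seq S -> Prop) (M M' : dfa S) :
  accepts M' L -> state M' = stT T -> minimal_dfa M L -> ntrans M <= 3 * #|S| * n.
Proof.
move=> acc' eM [_ min]; have := min _ acc'; rewrite eM => h.
have n0 : 0 < n by case: n T {h eM acc' M'} => [[[]]|].
apply: (leq_trans (ntrans_le M)).
have := leq_trans h (card_stT T) => h2.
move: h2 n0; move: #|S| => b; move: #|_| => a; nia.
Qed.

Lemma run_cat (S : finType) (M : dfa S) u x : forall q : state M,
  run q (u ++ x) = if run q u is Some q' then run q' x else None.
Proof.
elim: u => [|a u IH] q //=; case: (delta q a) => //.
Qed.

Lemma accepted_cat (S : finType) (M : dfa S) u x :
  accepted M (u ++ x) =
  if run (start M) u is Some q then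
    (if run q x is Some q' then final q' else false) else false.
Proof. by rewrite /accepted run_cat; case: (run _ u). Qed.

Lemma lower_gen (S : finType) (L : seq S -> Prop) (M : dfa S) (c0 : S) (A : seq S) m :
  accepts M L -> uniq A ->
  (forall i a, i < m -> a \in A -> exists y, L (nseq i c0 ++ a :: y)) ->
  (exists t, L (nseq m c0 ++ t)) ->
  (forall y, ~ L (nseq m.+1 c0 ++ y)) ->
  m * size A <= ntrans M.
Proof.
move=> acc uA H1 [t H2] H3.
case: (posnP (size A)) => [-> | a0]; first by rewrite muln0.
pose q i := odflt (start M) (run (start M) (nseq i c0)).
have F1 : forall i a, i < m -> a \in A ->
    run (start M) (nseq i c0) = Some (q i) /\ delta (q i) a != None.
  move=> i a lt aA; have [y /acc] := H1 i a lt aA.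
  rewrite accepted_cat /q; case: (run _ _) => [q'|] //= .
  by case: (delta q' a).
have F2 : forall i j, i < m -> j < m -> q i = q j -> i = j.
  have key : forall i j, i < j -> j < m -> q i = q j -> False.
    move=> i j ij jm e.
    have ai : accepted M (nseq i c0 ++ (nseq (m - i) c0 ++ t)).
      have im : i <= m by lia.
      by apply/acc; rewrite catA -nseqD subnKC.
    have aj : ~~ accepted M (nseq j c0 ++ (nseq (m - i) c0 ++ t)).
      apply/negP => /acc; rewrite catA -nseqD.
      have -> : j + (m - i) = m.+1 + (j - i - 1) by lia.
      by rewrite nseqD -catA; apply: H3.
    move: ai aj; rewrite !accepted_cat.
    have [r1 _] := F1 i (nth c0 A 0) (ltn_trans ij jm) (mem_nth c0 a0).
    have [r2 _] := F1 j (nth c0 A 0) jm (mem_nth c0 a0).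
    by rewrite r1 r2 e => ->.
  move=> i j im jm e; case: (ltngtP i j) => // ij.
    by case: (key _ _ ij jm e).
  by case: (key _ _ ij im (esym e)).
pose f := fun p : 'I_m * 'I_(size A) => (q p.1, nth c0 A p.2).
have fi : injective f.
  move=> [i j] [i' j'] [e1 e2].
  have ei : i = i' by apply: val_inj; apply: F2 (ltn_ord i) (ltn_ord i') e1.
  have ej : j = j' by apply: val_inj; apply/eqP; rewrite -(nth_uniq c0 (ltn_ord j) (ltn_ord j') uA) e2.
  by rewrite ei ej.
have <- : #|[set f p | p in [set: 'I_m * 'I_(size A)]]| = m * size A.
  by rewrite card_imset // cardsT card_prod !card_ord.
apply: subset_leq_card; apply/subsetP => x /imsetP[[i j] _ ->].
rewrite inE /=; exact: (F1 i _ (ltn_ord i) (mem_nth c0 (ltn_ord j))).2.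
Qed.

Definition par (N m : nat) (v : 'I_N.+1) : 'I_N.+1 :=
  if v <= m then inord v.-1 else inord m.
Definition lab (S : finType) (x0 : S) (N m : nat) (v : 'I_N.+1) : S :=
  if v <= m then nth x0 (enum S) 0 else nth x0 (enum S) (v - m).

Lemma par_val (N m : nat) (v : 'I_N.+1) : m <= N ->
  nat_of_ord (par m v) = if v <= m then v.-1 else m.
Proof.
move=> mN; rewrite /par; case: ifP => _ /=; rewrite inordK //. have := ltn_ord v; lia.
Qed.

Lemma par_root (N m : nat) : par m (ord0 : 'I_N.+1) = ord0.
Proof. by apply: val_inj; rewrite /par /= inordK. Qed.

Lemma par_le (N m : nat) (v : 'I_N.+1) : m <= N -> nat_of_ord (par m v) <= v.-1.
Proof.
move=> mN; rewrite par_val //; case: ifP => //; lia.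
Qed.

Lemma par_reach (N m : nat) (mN : m <= N) (v : 'I_N.+1) : exists k, iter k (par m) v = ord0.
Proof.
exists v; apply: val_inj => /=.
suff : forall j, nat_of_ord (iter j (par m) v) <= v - j.
  by move=> /(_ v); rewrite subnn leqn0 => /eqP.
elim=> [|j IH] /=; first by rewrite subn0.
have := par_le (iter j (par m) v) mN; lia.
Qed.

Lemma nth_enum_inj (S : finType) (x0 : S) i j : i < #|S| -> j < #|S| ->
  nth x0 (enum S) i = nth x0 (enum S) j -> i = j.
Proof.
move=> hi hj e; apply/eqP; rewrite -(nth_uniq x0 _ _ (enum_uniq S)) ?e //;
  by rewrite -cardT.
Qed.

Lemma lab_inj (S : finType) (x0 : S) (N m k : nat) (Hmk : m + k = N) (Hk : k < #|S|)
  (u v : 'I_N.+1) : u != ord0 -> v != ord0 -> par m u = par m v ->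
  lab x0 m u = lab x0 m v -> u = v.
Proof.
have mN : m <= N by lia.
move=> u0 v0 /(congr1 (@nat_of_ord _)); rewrite !par_val // /lab.
have := ltn_ord u; have := ltn_ord v.
move: u0 v0; rewrite -!(inj_eq val_inj) /= => u0 v0 hv hu.
case: (leqP u m) => hum; case: (leqP v m) => hvm => ep el; apply: ord_inj.
- lia.
- have := nth_enum_inj (i := 0) (j := v - m) ltac:(lia) ltac:(lia) el; lia.
- have := nth_enum_inj (i := u - m) (j := 0) ltac:(lia) ltac:(lia) el; lia.
- have h1 : u - m < #|S| by lia.
  have h2 : v - m < #|S| by lia.
  have := nth_enum_inj h1 h2 el; lia.
Qed.

Definition Tr (S : finType) (x0 : S) (N m k : nat) (Hmk : m + k = N) (Hk : k < #|S|) :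
  trie S N.+1 :=
  @Trie S N.+1 ord0 (par m) (lab x0 m) (par_root N m) (@par_reach N m (leq_trans (leq_addr k m) (eq_leq Hmk)))
    (@lab_inj S x0 N m k Hmk Hk).

Lemma Ew_rcons (S : finType) n (T : trie S n) w a : Ew T (rcons w a) = stepT T (Ew T w) a.
Proof. by rewrite /Ew -cats1 foldl_cat. Qed.

Lemma nseqSr (S : Type) (i : nat) (c : S) : nseq i.+1 c = rcons (nseq i c) c.
Proof. by rewrite -cats1 -addn1 nseqD. Qed.

Lemma lab_c0 (S : finType) (x0 : S) (N m k : nat) (Hmk : m + k = N) (Hk : k < #|S|)
  (v : 'I_N.+1) : (lab x0 m v == nth x0 (enum S) 0) = (v <= m).
Proof.
rewrite /lab; case: (leqP v m) => h; first by rewrite eqxx.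
apply/negP => /eqP e.
have h1 : v - m < #|S| by have := ltn_ord v; lia.
have h2 : 0 < #|S| by lia.
have := nth_enum_inj h1 h2 e; lia.
Qed.

Lemma Ew_c0 (S : finType) (x0 : S) (N m k : nat) (Hmk : m + k = N) (Hk : k < #|S|) i :
  Ew (Tr x0 Hmk Hk) (nseq i.+1 (nth x0 (enum S) 0)) = [set v : 'I_N.+1 | i < v <= m].
Proof.
have mN : m <= N by lia.
elim: i => [|i IH]; rewrite nseqSr Ew_rcons.
  apply/setP => v; rewrite !inE /= (@lab_c0 S x0 N m k Hmk Hk) -(inj_eq val_inj) /=.
  by rewrite andbT lt0n.
rewrite IH; apply/setP => v; rewrite !inE /= (@lab_c0 S x0 N m k Hmk Hk) -(inj_eq val_inj) /=.
rewrite par_val //.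
case: (leqP v m) => h; last by rewrite !andbF.
rewrite !andbT; case: (nat_of_ord v) h => [|vv] h //=.
by rewrite ltnS (ltnW h) andbT.

Qed.

Lemma leaf_fan (S : finType) (x0 : S) (N m k : nat) (Hmk : m + k = N) (Hk : k < #|S|)
  (v : 'I_N.+1) : m < v -> leafb (Tr x0 Hmk Hk) v.
Proof.
have mN : m <= N by lia.
move=> mv; apply/forallP => c; apply/implyP => _ /=; apply/eqP => /(congr1 (@nat_of_ord _)).
rewrite par_val //; case: leqP => h; lia.
Qed.

Lemma leaf_m (S : finType) (x0 : S) (N m k : nat) (Hmk : m + k = N) (Hk : k < #|S|) :
  k = 0 -> leafb (Tr x0 Hmk Hk) (inord m).
Proof.
have mN : m <= N by lia.
move=> k0; apply/forallP => c; apply/implyP => /= cn0; apply/eqP => /(congr1 (@nat_of_ord _)).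
move: cn0; rewrite -(inj_eq val_inj) /= => cn0.
rewrite par_val // inordK; last lia.
have := ltn_ord c; case: (leqP c m) => h; lia.
Qed.

Lemma m_in (S : finType) (x0 : S) (N m k : nat) (Hmk : m + k = N) (Hk : k < #|S|) i :
  i <= m -> (inord m : 'I_N.+1) \in Ew (Tr x0 Hmk Hk) (nseq i (nth x0 (enum S) 0)).
Proof.
have mN : m <= N by lia.
case: i => [|i] im; first by rewrite /Ew inE.
by rewrite Ew_c0 inE inordK //; lia.
Qed.

Lemma good_fan (S : finType) (x0 : S) (N m k : nat) (Hmk : m + k = N) (Hk : k < #|S|) i j :
  i <= m -> 0 < j <= k ->
  [exists v in Ew (Tr x0 Hmk Hk) (nseq i (nth x0 (enum S) 0) ++ [:: nth x0 (enum S) j]),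
     leafb (Tr x0 Hmk Hk) v].
Proof.
move=> im jk; have mN : m <= N by lia.
apply/existsP; exists (inord (m + j)); apply/andP; split; last first.
  by apply: leaf_fan; rewrite inordK; lia.
rewrite cats1 Ew_rcons inE /= -(inj_eq val_inj) /= inordK; last lia.
have -> : (m + j != 0) = true by lia.
rewrite /lab inordK; last lia.
have -> : (m + j <= m) = false by lia.
have -> : m + j - m = j by lia.
rewrite eqxx /=.
have -> : par m (inord (m + j) : 'I_N.+1) = inord m.
  apply: ord_inj; rewrite par_val // !inordK //; try lia.
  by have -> : (m + j <= m) = false by lia.
exact: m_in.
Qed.

Lemma Ew_over (S : finType) (x0 : S) (N m k : nat) (Hmk : m + k = N) (Hk : k < #|S|) y :
  Ew (Tr x0 Hmk Hk) (nseq m.+1 (nth x0 (enum S) 0) ++ y) = set0.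
Proof.
rewrite /Ew foldl_cat -/(Ew _ _) Ew_c0.
have -> : [set v : 'I_N.+1 | m < v <= m] = set0.
  by apply/setP => v; rewrite !inE; lia.
exact: foldl0.
Qed.

Lemma lower_L (S : finType) (x0 : S) (N m k : nat) (Hmk : m + k = N) (Hk : k < #|S|)
  (L : seq S -> Prop) (M : dfa S) : 0 < m -> accepts M L ->
  (forall w, [exists v in Ew (Tr x0 Hmk Hk) w, leafb (Tr x0 Hmk Hk) v] -> L w) ->
  (forall w, Ew (Tr x0 Hmk Hk) w = set0 -> ~ L w) ->
  m * k.+1 <= ntrans M.
Proof.
move=> m0 acc good bad.
pose c0 := nth x0 (enum S) 0.
pose A := [seq nth x0 (enum S) j | j <- iota 0 k.+1].
have sA : size A = k.+1 by rewrite size_map size_iota.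
pose t := if k == 0 then [::] else [:: nth x0 (enum S) 1].
have G1 : L (nseq m c0 ++ t).
  apply: good; rewrite /t; case: eqP => k0.
    rewrite cats0; apply/existsP; exists (inord m); rewrite leaf_m // andbT.
    exact: m_in.
  by apply: good_fan => //; lia.
rewrite -sA; apply: (lower_gen (c0 := c0) acc).
- rewrite map_inj_in_uniq ?iota_uniq // => a b; rewrite !mem_iota => ha hb.
  apply: nth_enum_inj; lia.
- move=> i a im /mapP[j]; rewrite mem_iota => hj ->.
  case: j hj => [|j] hj.
    exists (nseq (m - i).-1 c0 ++ t).
    rewrite -cat_cons -[_ :: nseq _ _]/(nseq (m - i).-1.+1 c0) catA -nseqD.
    by have -> : i + (m - i).-1.+1 = m by lia.
  exists [::]; apply: good; apply: good_fan; lia.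
- by exists t.
- move=> y; apply: bad; exact: Ew_over.
Qed.

Lemma arith (s n : nat) : 2 <= n -> 0 < s <= n ->
  let k := minn (s - 1) (n %/ 2 - 1) in
  [/\ (n.-1 - k) + k = n.-1, k < s, 0 < n.-1 - k & s * n <= 6 * ((n.-1 - k) * k.+1)].
Proof.
move=> n2 sn k; split; try lia.
rewrite /k; case: (leqP (s - 1) (n %/ 2 - 1)) => h.
  have e : (s - 1).+1 = s by lia.
  rewrite e; have : n <= 2 * (n.-1 - (s - 1)) by lia.
  move: (n.-1 - (s - 1)) => a; nia.
have h3 : n <= 3 * (n %/ 2) by lia.
have h2 : n <= 2 * (n.-1 - (n %/ 2 - 1)) by lia.
have e : (n %/ 2 - 1).+1 = n %/ 2 by lia.
rewrite e; move: h2 h3; move: (n.-1 - (n %/ 2 - 1)) => a; move: (n %/ 2) => b; nia.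
Qed.

Lemma lower_both (S : finType) (n : nat) : 2 <= n -> 0 < #|S| <= n ->
  exists T : trie S n,
    ((exists M : dfa S, minimal_dfa M (Suffix T)) /\
     forall M : dfa S, minimal_dfa M (Suffix T) -> #|S| * n <= 6 * ntrans M) /\
    ((exists M : dfa S, minimal_dfa M (Substr T)) /\
     forall M : dfa S, minimal_dfa M (Substr T) -> #|S| * n <= 6 * ntrans M).
Proof.
move=> n2 sn.
have [x0 _] : exists x0 : S, x0 \in S by apply/card_gt0P; case/andP: sn.
case: n n2 sn => [|N] // n2 sn.
have [Hmk Hk m0 Hle] := arith n2 sn.
set k := minn _ _ in Hmk Hk m0 Hle.
set m := (N.+1).-1 - k in Hmk Hk m0 Hle.
exists (Tr x0 Hmk Hk); split; split.
- apply: (@minimal_exists _ _ #|{: stT (Tr x0 Hmk Hk)}|).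
  by exists (Msuf (Tr x0 Hmk Hk)); split => //; apply: Msuf_acc.
- move=> M [acc _]; apply: (leq_trans Hle); rewrite leq_mul2l; apply/orP; right.
  apply: (@lower_L S x0 N m k Hmk Hk _ M m0 acc).
    by move=> w /Suffix_char.
  by move=> w e /Suffix_char; rewrite e => /existsP[v]; rewrite inE.
- apply: (@minimal_exists _ _ #|{: stT (Tr x0 Hmk Hk)}|).
  by exists (Msub (Tr x0 Hmk Hk)); split => //; apply: Msub_acc.
- move=> M [acc _]; apply: (leq_trans Hle); rewrite leq_mul2l; apply/orP; right.
  apply: (@lower_L S x0 N m k Hmk Hk _ M m0 acc).
    move=> w /existsP[v /andP[vin _]]; apply/Substr_char; apply/set0Pn; by exists v.
  by move=> w e /Substr_char; rewrite e eqxx.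
Qed.

Theorem theorem7 :
  (* upper bound O(sigma n) for Suffix *)
  (exists C : nat, forall (Sigma : finType) (n : nat) (T : trie Sigma n) (M : dfa Sigma),
      minimal_dfa M (Suffix T) -> ntrans M <= C * #|Sigma| * n) /\
  (* lower bound Omega(sigma n) for Suffix, for some tries *)
  (exists c : nat, forall (Sigma : finType) (n : nat),
      2 <= n -> 0 < #|Sigma| <= n ->
      exists T : trie Sigma n,
        (exists M : dfa Sigma, minimal_dfa M (Suffix T)) /\
        forall M : dfa Sigma, minimal_dfa M (Suffix T) -> #|Sigma| * n <= c * ntrans M) /\
  (* upper bound O(sigma n) for Substr *)
  (exists C : nat, forall (Sigma : finType) (n : nat) (T : trie Sigma n) (M : dfa Sigma),
      minimal_dfa M (Substr T) -> ntrans M <= C * #|Sigma| * n) /\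
  (* lower bound Omega(sigma n) for Substr, for some tries *)
  (exists c : nat, forall (Sigma : finType) (n : nat),
      2 <= n -> 0 < #|Sigma| <= n ->
      exists T : trie Sigma n,
        (exists M : dfa Sigma, minimal_dfa M (Substr T)) /\
        forall M : dfa Sigma, minimal_dfa M (Substr T) -> #|Sigma| * n <= c * ntrans M).
Proof.
split; [|split; [|split]].
- exists 3 => S n T M min; exact: (upper_gen (Msuf_acc T) erefl min).
- exists 6 => S n n2 sn; have [T [H _]] := lower_both n2 sn; by exists T.
- exists 3 => S n T M min; exact: (upper_gen (Msub_acc T) erefl min).
- exists 6 => S n n2 sn; have [T [_ H]] := lower_both n2 sn; by exists T.
Qed.
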